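(* Let $V$ be a vector space over $\mathbf k$ regarded as a graded space concentrated in degree $0$. Then Nijenhuis Lie algebra structures $(\mu,P)$ on $V$ are in bijection with Maurer–Cartan elements of the $L_\infty$-algebra $\mathfrak C_{\mathrm{NjL}}(V)$.
   Context: $\mathbf k$ is a field of characteristic $0$; graded spaces are homologically graded. $sV$ is the suspension, $(sV)_n=V_{n-1}$, $s$ of degree $1$. For homogeneous $x_1,\dots,x_n$ and $\sigma\in\mathbb S_n$, $\epsilon(\sigma;x_1,\dots,x_n)$ is defined by $x_1\odot\cdots\odot x_n=\epsilon(\sigma;x)\,x_{\sigma(1)}\odot\cdots\odot x_{\sigma(n)}$ in the graded symmetric algebra, and $\chi(\sigma;x)=\mathrm{sgn}(\sigma)\epsilon(\sigma;x)$. For $i_1+\dots+i_r=N$, $\mathrm{sh}(i_1,\dots,i_r)$ is the set of $\sigma\in\mathbb S_N$ increasing on each consecutive block of sizes $i_1,\dots,i_r$ and with $\sigma(1)<\sigma(i_1+1)<\dots<\sigma(i_1+\dots+i_{r-1}+1)$. Shuffle brace: for $F\in\mathrm{Hom}((sV)^{\otimes m},sV)$, $G_j\in\mathrm{Hom}((sV)^{\otimes k_j},sV)$, $1\le n\le m$, $F\{G_1,\dots,G_n\}:=\sum_{i_1+\dots+i_{n+1}+n=m,\,i_p\ge0}\sum_{\sigma\in\mathrm{sh}(1^{i_1},k_1,1^{i_2},\dots,k_n,1^{i_{n+1}})}(F\circ(\mathrm{id}^{\otimes i_1}\otimes G_1\otimes\mathrm{id}^{\otimes i_2}\otimes\cdots\otimes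 G_n\otimes\mathrm{id}^{\otimes i_{n+1}}))\sigma^{-1}$, where $1^i$ denotes $i$ entries $1$, tensor products of maps obey the Koszul sign rule, and $(H\sigma^{-1})(x_1\otimes\cdots\otimes x_N):=\epsilon(\sigma;x_1,\dots,x_N)H(x_{\sigma(1)}\otimes\cdots\otimes x_{\sigma(N)})$. Maps on $(sV)^{\odot m}$ are identified with $\mathbb S_m$-invariant maps on $(sV)^{\otimes m}$. $[F,H]_{\mathrm{RN}}:=F\{H\}-(-1)^{|F||H|}H\{F\}$. $\mathfrak C_{\mathrm{Lie}}(V)=\prod_{n\ge1}\mathrm{Hom}((sV)^{\odot n},sV)$, $\mathfrak C_{\mathrm{NjO}}(V)=\prod_{n\ge1}\mathrm{Hom}((sV)^{\odot n},V)$, $\mathfrak C_{\mathrm{NjL}}(V)=\mathfrak C_{\mathrm{Lie}}(V)\oplus\mathfrak C_{\mathrm{NjO}}(V)$, graded by degree of maps. For $g\in\mathfrak C_{\mathrm{NjO}}(V)$ put $sg=s\circ g$; elements of $\mathfrak C_{\mathrm{Lie}}(V)$ are written $sh$ with $h=s^{-1}\circ sh$, so $|sh|=|h|+1$. Operations: $l_1=0$; $l_2(sf\otimes sh)=[sf,sh]_{\mathrm{RN}}$; for $sh\in\mathrm{Hom}((sV)^{\odot n},sV)$, $n\ge1$, and $g_1,\dots,g_n\in\mathfrak C_{\mathrm{NjO}}(V)$: $l_{n+1}(sh\otimes g_1\otimes\cdots\otimes g_n)=\sum_{\sigma\in\mathbb S_n}\chi(\sigma;g_1,\dots,g_n)(-1)^{n(|h|+1)+\sum_{p=1}^{n-1}\sum_{j=1}^p|g_{\sigma(j)}|}\sum_{k=0}^n(-1)^{(|h|+1)\sum_{i=1}^k(|g_{\sigma(i)}|+1)+k}s^{-1}\circ\big(sg_{\sigma(1)}\{sg_{\sigma(2)}\{\cdots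 sg_{\sigma(k)}\{sh\{sg_{\sigma(k+1)},\dots,sg_{\sigma(n)}\}\}\cdots\}\}\big)$ (for $k=0$ the term is $s^{-1}\circ sh\{sg_{\sigma(1)},\dots,sg_{\sigma(n)}\}$); $l_{n+1}(g_1\otimes\cdots\otimes g_k\otimes sh\otimes g_{k+1}\otimes\cdots\otimes g_n):=(-1)^{(|h|+1)\sum_{j\le k}|g_j|+k}l_{n+1}(sh\otimes g_1\otimes\cdots\otimes g_n)$; all other components vanish. This is an $L_\infty$-algebra: a graded space with maps $l_n$ of degree $n-2$, graded antisymmetric with respect to $\chi$, satisfying $\sum_{i=1}^n\sum_{\sigma\in\mathrm{Sh}(i,n-i)}\chi(\sigma;x)(-1)^{i(n-i)}l_{n-i+1}(l_i(x_{\sigma(1)},\dots,x_{\sigma(i)}),x_{\sigma(i+1)},\dots,x_{\sigma(n)})=0$ (with $\mathrm{Sh}(i,n-i)$ the $(i,n-i)$-shuffles). A Maurer–Cartan element is $\alpha$ of degree $-1$ with $\sum_{n\ge1}(-1)^{n(n-1)/2}\frac1{n!}l_n(\alpha^{\otimes n})=0$. A Nijenhuis Lie algebra structure on $V$ is a Lie bracket $\mu$ and a linear $P$ with $\mu(Pa,Pb)=P(\mu(Pa,b)+\mu(a,Pb)-P\mu(a,b))$. *)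

(* Defs.v *)
(* The L_infinity algebra C_NjL(V) of the paper, written out
   concretely for V a vector space concentrated in degree 0 (so sV is
   concentrated in degree 1). *)
From HB Require Import structures.
From mathcomp Require Import all_boot all_order all_algebra all_fingroup.
Set Implicit Arguments. Unset Strict Implicit. Unset Printing Implicit Defensive.
Import GRing.Theory.
Local Open Scope ring_scope.

Section NjL.
Variables (F : fieldType) (V : lmodType F).

(* A map (sV)^{\otimes a} -> sV (or -> V), sV identified with V via s;
   inputs are indexed by 0,1,...,a-1 (the arity a is carried separately). *)
Definition mmap := (nat -> V) -> V.

Definition sgn (n : nat) : F := (-1) ^+ n.

Definition pact (N : nat) (s : 'S_N) (p : nat) : nat :=
  if (insub p : option 'I_N) is Some i then val (s i) else p.

Definition upd (x : nat -> V) (i : nat) (u : V) : nat -> V :=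
  fun j => if j == i then u else x j.

Definition multilinear (a : nat) (H : mmap) : Prop :=
  (forall x y : nat -> V, (forall i, (i < a)%N -> x i = y i) -> H x = H y) /\
  (forall i, (i < a)%N -> forall (x : nat -> V) (c : F) (u v : V),
      H (upd x i (c *: u + v)) = c *: H (upd x i u) + H (upd x i v)).

(* S_a-invariance (H sigma^{-1} = H), where eps(sigma; x) = sgn sigma since
   all inputs lie in sV, of degree 1: maps on (sV)^{\odot a} *)
Definition sym_invariant (a : nat) (H : mmap) : Prop :=
  forall (s : 'S_a) (x : nat -> V), H x = sgn (odd_perm s) *: H (fun p => x (pact s p)).

Definition bstart (bs : seq nat) (j : nat) : nat := sumn (take j bs).
Definition inblock (bs : seq nat) (j p : nat) : bool :=
  (bstart bs j <= p)%N && (p < bstart bs j.+1)%N.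

Definition is_shuffle (bs : seq nat) (s : 'S_(sumn bs)) : bool :=
  [forall p : 'I_(sumn bs), forall q : 'I_(sumn bs),
     ((p < q)%N && [exists j : 'I_(size bs), inblock bs j p && inblock bs j q])
       ==> (s p < s q)%N] &&
  [forall j : 'I_(size bs), (j.+1 < size bs)%N ==>
     (pact s (bstart bs j) < pact s (bstart bs j.+1))%N].

Definition gdef : mmap * nat := (fun _ => 0, 0%N).

(* slot pattern id^{i_1} (x) G_1 (x) id^{i_2} (x) ... (x) G_n (x) id^{i_{n+1}} *)
Definition slots (n : nat) (t : seq nat) : seq (option nat) :=
  flatten [seq nseq (nth 0%N t j) None ++ (if (j < n)%N then [:: Some j] else [::])
          | j <- iota 0 n.+1].

Definition bsize (Gs : seq (mmap * nat)) (o : option nat) : nat :=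
  if o is Some j then (nth gdef Gs j).2 else 1%N.

(* F{G_1,...,G_n}; F has arity mF, Gs lists (G_j, k_j).  A map
   (sV)^{\otimes k} -> sV has degree 1 - k, whence the Koszul sign. *)
Definition brace (Fm : mmap) (mF : nat) (Gs : seq (mmap * nat)) : mmap :=
  fun x =>
  \sum_(t : (size Gs).+1.-tuple 'I_mF.+1 | (sumn (map val t) + size Gs == mF)%N)
   let sl := slots (size Gs) (map val t) in
   let bs := map (bsize Gs) sl in
   \sum_(s : 'S_(sumn bs) | is_shuffle s)
     (sgn (odd_perm s) *
      sgn (\sum_(q < size sl)
             (if nth None sl q is Some j
              then ((nth gdef Gs j).2.+1 * bstart bs q)%N else 0%N))%N)
     *: Fm (fun q => match nth None sl q with
                     | None => x (pact s (bstart bs q))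
                     | Some j => (nth gdef Gs j).1 (fun r => x (pact s (bstart bs q + r)))
                     end).

Definition rn (f : mmap) (a : nat) (h : mmap) (b : nat) : mmap :=
  fun x => brace f a [:: (h, b)] x - sgn (a.+1 * b.+1) *: brace h b [:: (f, a)] x.

(* l_{n+1}(sh (x) g_1 (x) ... (x) g_n), sh of arity n = size gs,
   gs = list of (g_j, arity of g_j); |g_j| = - arity, |h|+1 = 1 - n. *)
Definition lLie (h : mmap) (gs : seq (mmap * nat)) : mmap := fun x =>
  let n := size gs in
  \sum_(s : 'S_n)
    let gsig j := nth gdef gs (pact s j) in
    let chi := sgn (odd_perm s) *
               sgn (\sum_(p < n) \sum_(q < n)
                      (if (p < q)%N && (s q < s p)%N
                       then (nth gdef gs (s p)).2 * (nth gdef gs (s q)).2 else 0))%N in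
    (chi * sgn (n * n.+1 + \sum_(p < n.-1) \sum_(j < p.+1) (gsig j).2)%N) *:
    \sum_(k < n.+1)
      sgn (n.+1 * (\sum_(i < k) (gsig i).2.+1) + k)%N *:
      (foldr (fun j acc => (brace (gsig j).1 (gsig j).2 [:: acc], ((gsig j).2 - 1 + acc.2)%N))
             (brace h n [seq gsig j | j <- iota k (n - k)],
              (n - (n - k) + \sum_(j <- iota k (n - k)) (gsig j).2)%N)
             (iota 0 k)).1 x.

(* homogeneous elements: HLie a f in Hom((sV)^{\odot a}, sV) (degree 1-a),
   HNjo a g in Hom((sV)^{\odot a}, V) (degree -a) *)
Inductive hel := HLie of nat & mmap | HNjo of nat & mmap.
Definition hdef : hel := HNjo 0 (fun _ => 0).
Definition isLie (e : hel) : bool := if e is HLie _ _ then true else false.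
Definition har (e : hel) : nat := match e with HLie a _ => a | HNjo a _ => a end.
Definition hfn (e : hel) : mmap := match e with HLie _ f => f | HNjo _ f => f end.

(* elements of C_NjL(V) = prod_a Hom((sV)^a,sV) (+) prod_a Hom((sV)^a,V) *)
Record cel := Cel { clie : nat -> mmap; cnjo : nat -> mmap }.
Definition czero : cel := Cel (fun _ _ => 0) (fun _ _ => 0).
Definition cLie (a : nat) (f : mmap) : cel :=
  Cel (fun r => if r == a then f else fun _ => 0) (fun _ _ => 0).
Definition cNjo (a : nat) (f : mmap) : cel :=
  Cel (fun _ _ => 0) (fun r => if r == a then f else fun _ => 0).

Definition lbr (es : seq hel) : cel :=
  match es with
  | [:: HLie a f; HLie b h] => cLie (a + b - 1) (rn f a h b)
  | _ =>
    match [seq i <- iota 0 (size es) | isLie (nth hdef es i)] with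
    | [:: k] =>
      let e := nth hdef es k in
      let gs := [seq (hfn e', har e') | e' <- es & ~~ isLie e'] in
      if (har e == size gs) && (0 < size gs)%N then
        cNjo (sumn (map snd gs))
          (fun x => sgn ((har e).+1 * sumn (map snd (take k gs)) + k) *: lLie (hfn e) gs x)
      else czero
    | _ => czero
    end
  end.

(* degree -1 elements are pairs (m, g), m in Hom((sV)^{\odot 2}, sV),
   g in Hom(sV, V) *)
Definition deg_m1 (alpha : mmap * mmap) : Prop :=
  multilinear 2 alpha.1 /\ sym_invariant 2 alpha.1 /\
  multilinear 1 alpha.2 /\ sym_invariant 1 alpha.2.

Definition alpha_list (alpha : mmap * mmap) (w : seq bool) : seq hel :=
  [seq if b then HLie 2 alpha.1 else HNjo 1 alpha.2 | b <- w].

(* partial sums of  sum_{n>=1} (-1)^{n(n-1)/2}/n! l_n(alpha^{(x) n}),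
   l_n(alpha^{(x)n}) expanded multilinearly over the two components *)
Definition mc_psum (alpha : mmap * mmap) (N : nat) : cel :=
  Cel (fun r x => \sum_(1 <= n < N.+1) (sgn 'C(n, 2) / n`!%:R) *:
                    \sum_(w : n.-tuple bool) clie (lbr (alpha_list alpha w)) r x)
      (fun r x => \sum_(1 <= n < N.+1) (sgn 'C(n, 2) / n`!%:R) *:
                    \sum_(w : n.-tuple bool) cnjo (lbr (alpha_list alpha w)) r x).

(* Maurer-Cartan: the series converges to 0 (componentwise, discrete topology) *)
Definition MC_element (alpha : mmap * mmap) : Prop :=
  deg_m1 alpha /\
  forall r, (0 < r)%N -> forall x : nat -> V,
    exists N0, forall N, (N0 <= N)%N ->
      clie (mc_psum alpha N) r x = 0 /\ cnjo (mc_psum alpha N) r x = 0.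

Definition lie_bracket (mu : V -> V -> V) : Prop :=
  (forall (c : F) (a a' b : V), mu (c *: a + a') b = c *: mu a b + mu a' b) /\
  (forall (c : F) (a b b' : V), mu a (c *: b + b') = c *: mu a b + mu a b') /\
  (forall a, mu a a = 0) /\
  (forall a b c, mu a (mu b c) + mu b (mu c a) + mu c (mu a b) = 0).

Definition lin_map (P : V -> V) : Prop :=
  forall (c : F) (u v : V), P (c *: u + v) = c *: P u + P v.

Definition nijenhuis_lie (mu : V -> V -> V) (P : V -> V) : Prop :=
  lie_bracket mu /\ lin_map P /\
  forall a b, mu (P a) (P b) = P (mu (P a) b + mu a (P b) - P (mu a b)).

Definition njl_phi (mu : V -> V -> V) (P : V -> V) : mmap * mmap :=
  (fun x => mu (x 0%N) (x 1%N), fun x => P (x 0%N)).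

End NjL.

(* Main.v *)
Require Import Defs.
From HB Require Import structures.
From Stdlib Require Import FunctionalExtensionality.
From mathcomp Require Import all_boot all_order all_algebra all_fingroup.
From mathcomp Require Import zify.
Set Implicit Arguments. Unset Strict Implicit. Unset Printing Implicit Defensive.
Import GRing.Theory.
Local Open Scope ring_scope.

Definition validL (n : nat) (L : seq nat) : bool :=
  uniq L && all (fun k => k < n)%N L && (size L == n).

Definition fL n (L : seq nat) (i : 'I_n) : 'I_n :=
  if validL n L then insubd i (nth 0%N L i) else i.

Lemma fL_val n L i : validL n L -> val (@fL n L i) = nth 0%N L i.
Proof.
rewrite /fL => vL; rewrite vL val_insubd.
case/andP: vL => /andP[_ /allP aL] /eqP sL.
by rewrite aL // mem_nth // sL.
Qed.

Lemma fL_inj n L : injective (@fL n L).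
Proof.
move=> i j; case vL: (validL n L); last by rewrite /fL vL.
move=> /(congr1 val); rewrite !fL_val //.
case/andP: vL => /andP[uL _] /eqP sL.
by move/eqP; rewrite nth_uniq ?sL // => /eqP/val_inj.
Qed.

Definition mkperm n L : 'S_n := perm (@fL_inj n L).

Lemma pact_val n (s : 'S_n) (i : 'I_n) : pact s i = s i.
Proof. by rewrite /pact valK. Qed.

Lemma pact_mkperm n L : validL n L -> pact (mkperm n L) = fun k => nth k L k.
Proof.
move=> vL; apply: functional_extensionality => k.
have sL : size L = n by case/andP: vL => _ /eqP.
case: (ltnP k n) => kn.
  by rewrite -[k]/(val (Ordinal kn)) pact_val permE fL_val // (set_nth_default k) // sL.
rewrite /pact insubN ?nth_default ?sL //.
by rewrite -leqNgt.
Qed.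

Lemma mkperm_inj n : {in validL n &, injective (mkperm n)}.
Proof.
move=> L L' vL vL' e.
have := pact_mkperm vL; rewrite e pact_mkperm // => e2.
have sL : size L = n by case/andP: vL => _ /eqP.
have sL' : size L' = n by case/andP: vL' => _ /eqP.
apply: (@eq_from_nth _ 0%N); first by rewrite sL sL'.
move=> i; rewrite sL => ilt.
have := congr1 (fun f => f i) e2 => /= ei.
by move: ei; rewrite !(set_nth_default 0%N i) ?sL ?sL'.
Qed.

Lemma sumS (R : nmodType) n (LL : seq (seq nat)) :
  all (validL n) LL -> uniq LL -> size LL = n`! ->
  forall f : 'S_n -> R, \sum_(s : 'S_n) f s = \sum_(L <- LL) f (mkperm n L).
Proof.
move=> aL uL sL f; rewrite -(big_map (mkperm n) xpredT).
have u1 : uniq (map (mkperm n) LL).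
  rewrite map_inj_in_uniq //; move=> x y /(allP aL) vx /(allP aL) vy; exact: mkperm_inj.
have hs : (size (index_enum 'S_n) <= size (map (mkperm n) LL))%N.
  by rewrite [index_enum _]unlock -enumT -cardT card_Sn size_map sL.
have [_ eqm] := uniq_min_size u1 (fun x _ => mem_index_enum x) hs.
apply: perm_big; apply: uniq_perm => //; try exact: index_enum_uniq;
  try by move=> x; rewrite -eqm.
Qed.

Definition L3 : seq (seq nat) :=
  [:: [:: 0;1;2]; [:: 0;2;1]; [:: 1;0;2]; [:: 1;2;0]; [:: 2;0;1]; [:: 2;1;0]]%N.
Definition L2 : seq (seq nat) := [:: [:: 0;1]; [:: 1;0]]%N.

Lemma sumS3 (R : nmodType) (f : 'S_3 -> R) :
  \sum_(s : 'S_3) f s = \sum_(L <- L3) f (mkperm 3 L).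
Proof. by apply: sumS. Qed.
Lemma sumS2 (R : nmodType) (f : 'S_2 -> R) :
  \sum_(s : 'S_2) f s = \sum_(L <- L2) f (mkperm 2 L).
Proof. by apply: sumS. Qed.

Lemma pact_eq n (s t : 'S_n) : (forall i : 'I_n, pact s i = pact t i) -> s = t.
Proof. by move=> h; apply/permP => i; apply/val_inj; move: (h i); rewrite !pact_val. Qed.

Lemma pact_ge n (s : 'S_n) k : (n <= k)%N -> pact s k = k.
Proof. by move=> kn; rewrite /pact insubN // -leqNgt. Qed.

Lemma pactM n (s t : 'S_n) k : pact (s * t) k = pact t (pact s k).
Proof.
case: (ltnP k n) => kn.
  by rewrite -[k]/(val (Ordinal kn)) !pact_val permM.
by rewrite !pact_ge.
Qed.

Lemma pact_tperm n (i j : 'I_n) k :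
  pact (tperm i j) k = if k == i then val j else if k == j then val i else k.
Proof.
case: (ltnP k n) => kn'.
  rewrite -[k]/(val (Ordinal kn')) pact_val permE /=.
  set u := Ordinal kn'.
  have e1 : (u == i) = (k == i) by [].
  have e2 : (u == j) = (k == j) by [].
  by rewrite e1 e2; case: (k == i); case: (k == j).
have kn : (k < n)%N = false by rewrite ltnNge kn'.
rewrite pact_ge //.
have ki : (k == i) = false by apply/negbTE; apply: contraFN kn => /eqP ->.
have kj : (k == j) = false by apply/negbTE; apply: contraFN kn => /eqP ->.
by rewrite ki kj.
Qed.

Notation o3 k := (@Ordinal 3 k isT).
Notation o2 k := (@Ordinal 2 k isT).

Lemma pact1 n k : pact (1%g : 'S_n) k = k.
Proof. by case: (ltnP k n) => kn; [rewrite -[k]/(val (Ordinal kn)) pact_val perm1 | rewrite pact_ge]. Qed.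

Ltac permtac := apply: pact_eq => -[[|[|[|[|]]]] Hi] //;
  rewrite ?pact1 ?pactM ?pact_tperm ?pact_mkperm //.

Lemma odd3_0 : odd_perm (mkperm 3 [:: 0;1;2]%N) = false.
Proof. have -> : mkperm 3 [:: 0;1;2]%N = 1%g by permtac. by rewrite odd_perm1. Qed.
Lemma odd3_1 : odd_perm (mkperm 3 [:: 0;2;1]%N) = true.
Proof. have -> : mkperm 3 [:: 0;2;1]%N = tperm (o3 1) (o3 2) by permtac. by rewrite odd_tperm. Qed.
Lemma odd3_2 : odd_perm (mkperm 3 [:: 1;0;2]%N) = true.
Proof. have -> : mkperm 3 [:: 1;0;2]%N = tperm (o3 0) (o3 1) by permtac. by rewrite odd_tperm. Qed.
Lemma odd3_5 : odd_perm (mkperm 3 [:: 2;1;0]%N) = true.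
Proof. have -> : mkperm 3 [:: 2;1;0]%N = tperm (o3 0) (o3 2) by permtac. by rewrite odd_tperm. Qed.
Lemma odd3_3 : odd_perm (mkperm 3 [:: 1;2;0]%N) = false.
Proof. have -> : mkperm 3 [:: 1;2;0]%N = (tperm (o3 1) (o3 2) * tperm (o3 0) (o3 1))%g by permtac. by rewrite odd_permM !odd_tperm. Qed.
Lemma odd3_4 : odd_perm (mkperm 3 [:: 2;0;1]%N) = false.
Proof. have -> : mkperm 3 [:: 2;0;1]%N = (tperm (o3 0) (o3 1) * tperm (o3 1) (o3 2))%g by permtac. by rewrite odd_permM !odd_tperm. Qed.
Lemma odd2_0 : odd_perm (mkperm 2 [:: 0;1]%N) = false.
Proof. have -> : mkperm 2 [:: 0;1]%N = 1%g by permtac. by rewrite odd_perm1. Qed.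
Lemma odd2_1 : odd_perm (mkperm 2 [:: 1;0]%N) = true.
Proof. have -> : mkperm 2 [:: 1;0]%N = tperm (o2 0) (o2 1) by permtac. by rewrite odd_tperm. Qed.

Lemma forall_ord_all n (P : nat -> bool) : [forall i : 'I_n, P i] = all P (iota 0 n).
Proof.
apply/forallP/allP => [h x|h i]; first by rewrite mem_iota add0n => xn; exact: (h (Ordinal xn)).
by apply: h; rewrite mem_iota add0n ltn_ord.
Qed.

Lemma exists_ord_has n (P : nat -> bool) : [exists i : 'I_n, P i] = has P (iota 0 n).
Proof.
apply/existsP/hasP => [[i hi]|[x]]; first by exists (val i); rewrite // mem_iota add0n ltn_ord.
by rewrite mem_iota add0n => xn hx; exists (Ordinal xn).
Qed.

Definition is_shuffle_nat (bs : seq nat) (f : nat -> nat) : bool :=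
  all (fun p => all (fun q => ((p < q)%N && has (fun j => inblock bs j p && inblock bs j q)
        (iota 0 (size bs))) ==> (f p < f q)%N) (iota 0 (sumn bs))) (iota 0 (sumn bs)) &&
  all (fun j => (j.+1 < size bs)%N ==> (f (bstart bs j) < f (bstart bs j.+1))%N)
      (iota 0 (size bs)).

Lemma is_shuffleE bs (s : 'S_(sumn bs)) : is_shuffle s = is_shuffle_nat bs (pact s).
Proof.
rewrite /is_shuffle /is_shuffle_nat -!forall_ord_all; congr andb.
apply: eq_forallb => p; rewrite -forall_ord_all; apply: eq_forallb => q.
by rewrite -exists_ord_has !pact_val.
Qed.

Lemma big_tuple_S (R : nmodType) (T : finType) n (f : n.+1.-tuple T -> R) :
  \sum_(t : n.+1.-tuple T) f t = \sum_(x : T) \sum_(t : n.-tuple T) f (cons_tuple x t).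
Proof.
rewrite pair_big /=.
rewrite (reindex (fun p : T * n.-tuple T => cons_tuple p.1 p.2)) //.
exists (fun t => (thead t, behead_tuple t)) => [[x t] _|t _] /=.
  by congr pair; apply: val_inj.
by rewrite [t in RHS]tuple_eta; apply: val_inj.
Qed.

Lemma big_tuple_0 (R : nmodType) (T : finType) (f : 0.-tuple T -> R) :
  \sum_(t : 0.-tuple T) f t = f [tuple].
Proof. by rewrite (big_pred1 [tuple]) // => t; apply/esym/eqP/tuple0. Qed.

Lemma sumS3c (R : nmodType) (P : 'S_3 -> bool) (f : 'S_3 -> R) :
  \sum_(s : 'S_3 | P s) f s = \sum_(L <- L3) (if P (mkperm 3 L) then f (mkperm 3 L) else 0).
Proof. by rewrite big_mkcond sumS3. Qed.
Lemma sumS2c (R : nmodType) (P : 'S_2 -> bool) (f : 'S_2 -> R) :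
  \sum_(s : 'S_2 | P s) f s = \sum_(L <- L2) (if P (mkperm 2 L) then f (mkperm 2 L) else 0).
Proof. by rewrite big_mkcond sumS2. Qed.
Definition sgnE := (odd3_0, odd3_1, odd3_2, odd3_3, odd3_4, odd3_5, odd2_0, odd2_1).
Lemma sgn_odd (F : fieldType) n : sgn F n = if odd n then -1 else 1.
Proof. by rewrite /sgn -signr_odd; case: (odd n); rewrite ?expr1 ?expr0. Qed.
Lemma mkperm_val n L (i : 'I_n) : validL n L -> val (mkperm n L i) = nth 0%N L i.
Proof. by move=> vL; rewrite permE fL_val. Qed.

Lemma big_tuple_Sc (R : nmodType) (T : finType) n (P : pred (n.+1.-tuple T)) (f : n.+1.-tuple T -> R) :
  \sum_(t : n.+1.-tuple T | P t) f t =
  \sum_(x : T) \sum_(t : n.-tuple T | P (cons_tuple x t)) f (cons_tuple x t).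
Proof. by rewrite big_mkcond big_tuple_S; apply: eq_bigr => x _; rewrite [RHS]big_mkcond. Qed.

Lemma big_tuple_0c (R : nmodType) (T : finType) (P : pred (0.-tuple T)) (f : 0.-tuple T -> R) :
  \sum_(t : 0.-tuple T | P t) f t = if P [tuple] then f [tuple] else 0.
Proof. by rewrite big_mkcond big_tuple_0. Qed.

Ltac expand_step :=
  rewrite ?big_tuple_Sc; rewrite ?big_ord_recl ?big_ord0 ?big_tuple_0c /=;
  rewrite ?sumS3c ?sumS2c ?big_cons ?big_nil /=;
  rewrite ?is_shuffleE ?pact_mkperm ?mkperm_val // /= ?sgnE /bump /bstart /=.

Lemma mem_mkperm n (LL : seq (seq nat)) :
  all (validL n) LL -> uniq LL -> size LL = n`! ->
  forall s : 'S_n, s \in map (mkperm n) LL.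
Proof.
move=> aL uL sL s.
have u1 : uniq (map (mkperm n) LL).
  rewrite map_inj_in_uniq //; move=> x y /(allP aL) vx /(allP aL) vy; exact: mkperm_inj.
have hs : (size (index_enum 'S_n) <= size (map (mkperm n) LL))%N.
  by rewrite [index_enum _]unlock -enumT -cardT card_Sn size_map sL.
have [_ eqm] := uniq_min_size u1 (fun x _ => mem_index_enum x) hs.
by rewrite eqm mem_index_enum.
Qed.

Lemma S2_cases (s : 'S_2) : s = mkperm 2 [:: 0; 1]%N \/ s = mkperm 2 [:: 1; 0]%N.
Proof.
have := @mem_mkperm 2 L2 isT isT erefl s.
by rewrite !inE => /orP[/eqP|/eqP]; [left|right].
Qed.

Lemma S1_cases (s : 'S_1) : s = 1%g.
Proof.
have := @mem_mkperm 1 [:: [:: 0%N]] isT isT erefl s.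
rewrite !inE => /eqP ->; permtac.
Qed.

Section S.
Variables (F : fieldType) (V : lmodType F).
Variable mu : V -> V -> V.
Variable p : V -> V.
Definition mm : mmap V := fun x => mu (x 0%N) (x 1%N).
Definition pp : mmap V := fun x => p (x 0%N).

Ltac fin := rewrite /mm /pp /= ?sgn_odd /= ?mulN1r ?mul1r ?opprK ?scaleN1r ?scale1r ?add0r ?addr0.

Lemma B4 x : brace mm 2 [::] x = mu (x 0%N) (x 1%N).
Proof. by rewrite /brace; do 4 expand_step; fin. Qed.
Lemma B3 (G : mmap V) x : brace pp 1 [:: (G, 2%N)] x = p (G x).
Proof.
rewrite /brace; do 4 expand_step; fin.
have -> : (fun r : nat => x (nth (0 + r)%N [:: 0%N; 1%N] (0 + r)%N)) = x.
  by apply: functional_extensionality => r; rewrite add0n; case: r => [|[|r]] //=; rewrite nth_nil.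
by [].
Qed.
Lemma B2 x : brace mm 2 [:: (pp, 1%N)] x = mu (p (x 0%N)) (x 1%N) + mu (x 0%N) (p (x 1%N)).
Proof. by rewrite /brace; do 4 expand_step; fin. Qed.
Lemma B1 x : brace mm 2 [:: (pp, 1%N); (pp, 1%N)] x = mu (p (x 0%N)) (p (x 1%N)).
Proof. by rewrite /brace; do 4 expand_step; fin. Qed.

Lemma aux2 (a b c : V) : - (a + (- b + c)) + (1 * -1) *: (a + (- b + c)) = -2 *: (a - b + c).
Proof. by rewrite (addrA a) mul1r scaleN1r scaleNr mulr2n scalerDl scale1r [RHS]opprD. Qed.

Lemma lLieA x : lLie mm [:: (pp, 1%N); (pp, 1%N)] x =
  (-2) *: (mu (p (x 0%N)) (p (x 1%N)) - p (mu (p (x 0%N)) (x 1%N) + mu (x 0%N) (p (x 1%N)))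
           + p (p (mu (x 0%N) (x 1%N)))).
Proof.
rewrite /lLie sumS2 !big_cons big_nil /= !pact_mkperm // /= ?sgnE.
rewrite !big_ord_recl !big_ord0 /= ?mkperm_val // /bump /= ?big_cons ?big_nil /=.
rewrite !B3 !B1 !B2 !B4.
fin.
exact: aux2.
Qed.

Lemma braceA x : brace mm 2 [:: (mm, 2%N)] x =
  mu (mu (x 0%N) (x 1%N)) (x 2%N) - mu (mu (x 0%N) (x 2%N)) (x 1%N) - mu (x 0%N) (mu (x 1%N) (x 2%N)).
Proof. by rewrite /brace; do 4 expand_step; fin. Qed.
Definition lbr2 (es : seq (hel V)) : cel V :=
    match [seq i <- iota 0 (size es) | isLie (nth (hdef V) es i)] with
    | [:: k] =>
      let e := nth (hdef V) es k in
      let gs := [seq (hfn e', har e') | e' <- es & ~~ isLie e'] in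
      if (har e == size gs) && (0 < size gs)%N then
        cNjo (sumn (map snd gs))
          (fun x => sgn F ((har e).+1 * sumn (map snd (take k gs)) + k) *: lLie (hfn e) gs x)
      else czero V
    | _ => czero V
    end.

Lemma lbrE (es : seq (hel V)) : size es != 2%N -> lbr es = lbr2 es.
Proof.
case: es => [|e1 es] //; case: e1 => [a f|a f]; case: es => [|e2 es] //;
  case: e2 => [b h|b h] //; by case: es.
Qed.

Lemma lbr_big (a1 a2 : mmap V) (w : seq bool) : (4 <= size w)%N ->
  lbr (alpha_list (a1, a2) w) = czero V.
Proof.
move=> hw; set es := alpha_list _ w.
have ses : size es = size w by rewrite size_map.
rewrite lbrE ?ses; last by case: (size w) hw => [|[|[|]]].
rewrite /lbr2.
case E: [seq i <- iota 0 (size es) | isLie (nth (hdef V) es i)] => [|k [|k' l]] //.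
have kin : k \in [seq i <- iota 0 (size es) | isLie (nth (hdef V) es i)] by rewrite E mem_head.
rewrite mem_filter mem_iota add0n in kin; case/andP: kin => lk kl.
have hnth : nth (hdef V) es k = HLie 2 a1.
  move: lk; rewrite /es /alpha_list (nth_map false) -?ses //.
  by case: (nth false w k).
have cnt : count (@isLie F V) es = 1%N.
  have := congr1 size E; rewrite size_filter /= => <-.
  by rewrite -[in LHS](mkseq_nth (hdef V) es) /mkseq count_map.
have sg : size [seq (hfn e', har e') | e' <- es & ~~ isLie e'] = (size w - 1)%N.
  rewrite size_map size_filter; have := count_predC (@isLie F V) es.
  by rewrite cnt ses add1n => <-; rewrite subn1.
rewrite /=; case: ifP => // /andP[/eqP H _]; move: H.
rewrite hnth sg /=; move: hw; case: (size w) => [|[|[|[|n]]]] //.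
Qed.
Lemma mc_clie N r x : (3 <= N)%N -> (2%:R : F) != 0 ->
  clie (mc_psum (njl_phi mu p) N) r x = if r == 3%N then
  - (mu (mu (x 0%N) (x 1%N)) (x 2%N) - mu (mu (x 0%N) (x 2%N)) (x 1%N) - mu (x 0%N) (mu (x 1%N) (x 2%N)))
  else 0.
Proof.
move=> hN h2; rewrite /mc_psum /=.
rewrite (big_ltn (m:=1%N) (n:=N.+1)); last by lia.
rewrite (big_ltn (m:=2%N) (n:=N.+1)); last by lia.
rewrite (big_ltn (m:=3%N) (n:=N.+1)); last by lia.
rewrite [\sum_(4 <= i < N.+1) _]big1_seq ?addr0; last first.
  move=> n /andP[_]; rewrite mem_index_iota => /andP[hn _].
  rewrite big1 ?scaler0 // => w _.
  by rewrite lbr_big ?size_tuple.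
do 3 (rewrite ?big_tuple_S; rewrite ?big_bool); rewrite ?big_tuple_0 /=.
have -> : (2 + 2 - 1)%N = 3%N by [].
case: (r == 3%N); rewrite /= ?(addr0, add0r, scaler0) //.
rewrite /rn (braceA x).
set b := (X in X - _ *: X).
have -> : sgn F 'C(2, 2) = -1 by rewrite binn sgn_odd.
have -> : sgn F (3 * 3) = -1 by rewrite sgn_odd.
have -> : (2`!)%:R = 2%:R :> F by [].
rewrite scaleN1r opprK -mulr2n -scaler_nat scalerA -mulrA mulVf // mulr1 scaleN1r.
by [].
Qed.
Lemma mc_cnjo N r x : (3 <= N)%N -> (2%:R : F) != 0 -> (3%:R : F) != 0 ->
  cnjo (mc_psum (njl_phi mu p) N) r x = if r == 2%N then
   mu (p (x 0%N)) (p (x 1%N)) - p (mu (p (x 0%N)) (x 1%N) + mu (x 0%N) (p (x 1%N)))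
           + p (p (mu (x 0%N) (x 1%N)))
  else 0.
Proof.
move=> hN h2 h3; rewrite /mc_psum /=.
rewrite (big_ltn (m:=1%N) (n:=N.+1)); last by lia.
rewrite (big_ltn (m:=2%N) (n:=N.+1)); last by lia.
rewrite (big_ltn (m:=3%N) (n:=N.+1)); last by lia.
rewrite [\sum_(4 <= i < N.+1) _]big1_seq ?addr0; last first.
  move=> n /andP[_]; rewrite mem_index_iota => /andP[hn _].
  rewrite big1 ?scaler0 // => w _.
  by rewrite lbr_big ?size_tuple.
do 3 (rewrite ?big_tuple_S; rewrite ?big_bool); rewrite ?big_tuple_0 /=.
case: (r == 2%N); rewrite /= ?(addr0, add0r, scaler0) //.
rewrite !lLieA.
set T := (X in _ = X).
have -> : 'C(3, 2) = 3%N by [].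
have -> : (3`!)%:R = 6%:R :> F by [].
rewrite !sgn_odd /= !scale1r -!scalerDl scalerA.
have h6 : (6%:R : F) != 0 by rewrite (natrM F 2 3) mulf_neq0.
have -> : (-1 / 6%:R) * (-2 + (-2 + -2)) = 1 :> F.
  apply: (mulIf h6); rewrite mulrAC -(mulrA (-1)) mulVf // mulr1 mul1r.
  by rewrite -!opprD mulN1r opprK -!natrD.
by rewrite scale1r.
Qed.
End S.

Section Main.
Variables (F : fieldType) (V : lmodType F).

Lemma J_eq (mu : V -> V -> V) :
  (forall a b, mu b a = - mu a b) -> (forall a b, mu a (- b) = - mu a b) ->
  forall a b c, mu (mu a b) c - mu (mu a c) b - mu a (mu b c) =
                - (mu a (mu b c) + mu b (mu c a) + mu c (mu a b)).
Proof.
move=> anti oppr a b c.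
rewrite (anti c (mu a b)) (anti b (mu a c)) (anti c a) oppr opprK.
by rewrite !opprD [LHS]addrC [- mu c _ - _]addrC addrA.
Qed.

Lemma lie_props (mu : V -> V -> V) : lie_bracket mu ->
  (forall a b, mu b a = - mu a b) /\ (forall a b, mu a (- b) = - mu a b).
Proof.
case=> l1 [l2 [alt _]].
have L a a' b : mu (a + a') b = mu a b + mu a' b by have := l1 1 a a' b; rewrite !scale1r.
have R a b b' : mu a (b + b') = mu a b + mu a b' by have := l2 1 a b b'; rewrite !scale1r.
have R0 a : mu a 0 = 0.
  have := R a 0 0; rewrite addr0 => /(congr1 (fun v => v - mu a 0)) /=.
  by rewrite subrr addrK => e; rewrite -e.
split.
  move=> a b; have := alt (a + b); rewrite L !R !alt add0r addr0 => /eqP.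
  by rewrite addrC addr_eq0 => /eqP.
by move=> a b; have := l2 (-1) a b 0; rewrite addr0 R0 addr0 !scaleN1r.
Qed.

Lemma deg_m1_phi (mu : V -> V -> V) (P : V -> V) :
  lie_bracket mu -> lin_map P -> deg_m1 (njl_phi mu P).
Proof.
move=> Lmu LP; have [anti _] := lie_props Lmu.
case: Lmu => l1 [l2 _].
split; [|split; [|split]].
- split => [x y e|]; first by rewrite /= !e.
  by case=> [|[|i]] // _ x c u v; rewrite /upd /=; [apply: l1|apply: l2].
- move=> s x; case: (S2_cases s) => ->; rewrite ?odd2_0 ?odd2_1 pact_mkperm //=.
    by rewrite sgn_odd /= scale1r.
  by rewrite sgn_odd /= scaleN1r -anti.
- split => [x y e|]; first by rewrite /= e.
  by case=> [|i] // _ x c u v; rewrite /upd /=; apply: LP.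
- move=> s x; rewrite (S1_cases s) odd_perm1 sgn_odd /= scale1r.
  by rewrite pact1.
Qed.

Lemma linP (P : V -> V) : lin_map P ->
  [/\ P 0 = 0, forall u v, P (u + v) = P u + P v & forall u v, P (u - v) = P u - P v].
Proof.
move=> LP.
have D u v : P (u + v) = P u + P v by have := LP 1 u v; rewrite !scale1r.
have Z : P 0 = 0.
  have := D 0 0; rewrite addr0 => /(congr1 (fun v => v - P 0)) /=.
  by rewrite subrr addrK => e; rewrite -e.
have N u : P (- u) = - P u by have := LP (-1) u 0; rewrite addr0 Z addr0 !scaleN1r.
by split => // u v; rewrite D N.
Qed.

Lemma dm_lie (mu : V -> V -> V) (P : V -> V) : (2%:R : F) != 0 ->
  deg_m1 (njl_phi mu P) ->
  (forall a b c, mu (mu a b) c - mu (mu a c) b - mu a (mu b c) = 0) ->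
  lie_bracket mu /\ lin_map P.
Proof.
move=> h2 [[_ ml1] [si2 [[_ ml2] _]]] J.
have l1 c a a' b : mu (c *: a + a') b = c *: mu a b + mu a' b.
  by have := ml1 0%N isT (fun=> b) c a a'.
have l2 c a b b' : mu a (c *: b + b') = c *: mu a b + mu a b'.
  by have := ml1 1%N isT (fun=> a) c b b'.
have anti a b : mu a b = - mu b a.
  have := si2 (mkperm 2 [:: 1; 0]%N) (fun i => if i == 0%N then a else b).
  by rewrite odd2_1 pact_mkperm //= sgn_odd /= scaleN1r.
have R0 a : mu a 0 = 0.
  have := l2 1 a 0 0; rewrite !scale1r addr0 => /(congr1 (fun v => v - mu a 0)) /=.
  by rewrite subrr addrK => e; rewrite -e.
have oppr a b : mu a (- b) = - mu a b by have := l2 (-1) a b 0; rewrite addr0 R0 addr0 !scaleN1r.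
have alt a : mu a a = 0.
  have e : (2%:R : F) *: mu a a = 0 by rewrite scaler_nat mulr2n {1}anti addNr.
  by have := congr1 (fun v => (2%:R : F)^-1 *: v) e; rewrite scalerA mulVf // scale1r scaler0.
split; last by move=> c u v; have := ml2 0%N isT (fun=> u) c u v.
split => //; split => //; split => // a b c.
have anti' x y : mu y x = - mu x y by rewrite anti.
have := J a b c; rewrite J_eq //.
by move/eqP; rewrite oppr_eq0 => /eqP ->.
Qed.
End Main.

Theorem proposition9p3 (F : fieldType) (V : lmodType F)
  (char0 : [pchar F] =i pred0) :
  (forall (mu : V -> V -> V) (P : V -> V),
      nijenhuis_lie mu P -> MC_element (njl_phi mu P)) /\
  (forall alpha : mmap V * mmap V, MC_element alpha ->
      exists! muP : (V -> V -> V) * (V -> V),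
        nijenhuis_lie muP.1 muP.2 /\ njl_phi muP.1 muP.2 = alpha).
Proof.
move/pcharf0P: char0 => hn.
have h2 : (2%:R : F) != 0 by rewrite hn.
have h3 : (3%:R : F) != 0 by rewrite hn.
split.
- move=> mu P [Lmu [LP nij]].
  have [anti oppr] := lie_props Lmu.
  have [_ _ PB] := linP LP.
  split; first exact: deg_m1_phi.
  move=> r _ x; exists 3%N => N hN.
  rewrite mc_clie // mc_cnjo //; split.
    case: (r == 3%N) => //.
    by rewrite J_eq // opprK; case: Lmu => _ [_ [_ ->]].
  case: (r == 2%N) => //.
  by rewrite nij PB addrAC subrK subrr.
- move=> [a1 a2] [dm mc].
  pose mu := fun a b => a1 (fun i => if i == 0%N then a else b).
  pose P := fun a => a2 (fun _ : nat => a).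
  have ea : (a1, a2) = njl_phi mu P.
    case: dm => [[e1 _] [_ [[e2 _] _]]].
    congr pair; apply: functional_extensionality => x /=.
      by apply: e1 => -[|[|i]].
    by apply: e2 => -[|i].
  rewrite ea in dm mc *.
  have jz a b c : mu (mu a b) c - mu (mu a c) b - mu a (mu b c) = 0.
    have [N0 hN] := mc 3%N isT (fun i => if i == 0%N then a else if i == 1%N then b else c).
    have [h _] := hN (maxn N0 3) (leq_maxl _ _).
    move: h; rewrite mc_clie ?leq_maxr // eqxx /= => /eqP; rewrite oppr_eq0 => /eqP.
    done.
  have [Lmu LP] := dm_lie h2 dm jz.
  have [_ _ PB] := linP LP.
  exists (mu, P); split.
    split => //=; split => //; split => // a b.
    have [N0 hN] := mc 2%N isT (fun i => if i == 0%N then a else b).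
    have [_ h] := hN (maxn N0 3) (leq_maxl _ _).
    move: h; rewrite mc_cnjo ?leq_maxr // eqxx /= => E.
    apply/eqP; rewrite PB -subr_eq0 opprD opprK addrA E.
    done.
  move=> [m' P'] [_ /= e].
  have e1 := congr1 fst e; have e2 := congr1 snd e; simpl in e1, e2.
  congr pair; apply: functional_extensionality => a.
    apply: functional_extensionality => b.
    by have := congr1 (fun f => f (fun i => if i == 0%N then a else b)) e1.
  by have := congr1 (fun f => f (fun _ => a)) e2.
Qed.
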